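(* Let $\mathfrak{g}$ be a Lie algebra with two stratifications $$V_1\oplus\dots\oplus V_s=\mathfrak{g}=W_1\oplus\dots\oplus W_t.$$ Then $s=t$ and there exists a Lie algebra automorphism $A:\mathfrak{g}\to\mathfrak{g}$ such that $A(V_i)=W_i$ for all $i\in\{1,\dots,s\}$.
   Context: All Lie algebras are finite-dimensional over $\mathbb R$. For subspaces $V,W$ of a Lie algebra, $[V,W]:=\operatorname{span}\{[X,Y]: X\in V, Y\in W\}$. A stratification of a Lie algebra $\mathfrak{g}$ is a direct-sum decomposition $\mathfrak{g}=V_1\oplus\dots\oplus V_s$ for some integer $s\ge1$ with $V_s\neq\{0\}$ and $[V_1,V_j]=V_{j+1}$ for all $j\in\{1,\dots,s\}$, where $V_{s+1}:=\{0\}$. *)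

(* Defs.v *)
From HB Require Import structures.
From mathcomp Require Import all_boot all_order all_algebra.
Set Implicit Arguments. Unset Strict Implicit. Unset Printing Implicit Defensive.
Import GRing.Theory.
Local Open Scope ring_scope.

Definition is_lie_bracket (F : fieldType) (L : vectType F) (br : L -> L -> L) : Prop :=
  [/\ (forall (a : F) (x y z : L), br (a *: x + y) z = a *: br x z + br y z),
      (forall (a : F) (x y z : L), br x (a *: y + z) = a *: br x y + br x z),
      (forall x : L, br x x = 0) &
      (forall x y z : L, br x (br y z) + br y (br z x) + br z (br x y) = 0)].

Definition is_bracket_span (F : fieldType) (L : vectType F) (br : L -> L -> L)
    (U W Z : {vspace L}) : Prop :=
  (forall x y, x \in U -> y \in W -> br x y \in Z) /\
  (forall Z' : {vspace L},
      (forall x y, x \in U -> y \in W -> br x y \in Z') -> (Z <= Z')%VS).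

(* V 1 (+) ... (+) V s is a stratification of (L, br); indices 1..s are used,
   other values of V are irrelevant; V (s+1) := 0. *)
Definition stratification (F : fieldType) (L : vectType F) (br : L -> L -> L)
    (s : nat) (V : nat -> {vspace L}) : Prop :=
  [/\ (1 <= s)%N,
      (\sum_(1 <= i < s.+1) V i)%VS = fullv,
      directv (\sum_(1 <= i < s.+1) V i)%VS,
      V s != 0%VS &
      (forall j, (1 <= j <= s)%N ->
         is_bracket_span br (V 1%N) (V j) (if (j < s)%N then V j.+1 else 0%VS))].

Definition lie_automorphism (F : fieldType) (L : vectType F) (br : L -> L -> L)
    (A : 'End(L)) : Prop :=
  lker A = 0%VS /\ (forall x y : L, A (br x y) = br (A x) (A y)).

(* Main.v *)
Require Import Defs.
From HB Require Import structures.
From mathcomp Require Import all_boot all_order all_algebra.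
From mathcomp Require Import zify.
Local Open Scope ring_scope.
Import GRing.Theory.
Set Implicit Arguments. Unset Strict Implicit.

Section Basic.
Variables (F : fieldType) (L : vectType F) (br : L -> L -> L).
Hypothesis Hbr : is_lie_bracket br.

Lemma br0l z : br 0 z = 0.
Proof.
case: Hbr => H _ _ _; have := H 1 0 0 z.
rewrite !scale1r addr0 => /(congr1 (fun t => t - br 0 z)).
rewrite subrr addrK => H0; exact: esym H0.
Qed.
Lemma br0r z : br z 0 = 0.
Proof.
case: Hbr => _ H _ _; have := H 1 z 0 0.
rewrite !scale1r addr0 => /(congr1 (fun t => t - br z 0)).
rewrite subrr addrK => H0; exact: esym H0.
Qed.
Lemma brDl x y z : br (x + y) z = br x z + br y z.
Proof. by case: Hbr => H _ _ _; have := H 1 x y z; rewrite !scale1r. Qed.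
Lemma brDr x y z : br z (x + y) = br z x + br z y.
Proof. by case: Hbr => _ H _ _; have := H 1 z x y; rewrite !scale1r. Qed.
Lemma brZl a x z : br (a *: x) z = a *: br x z.
Proof. by case: Hbr => H _ _ _; rewrite -[a *: x]addr0 H br0l addr0. Qed.
Lemma brZr a x z : br z (a *: x) = a *: br z x.
Proof. by case: Hbr => _ H _ _; rewrite -[a *: x]addr0 H br0r addr0. Qed.
Lemma brN x y : br x y = - br y x.
Proof.
case: Hbr => _ _ H _; have := H (x + y).
rewrite brDl !brDr !H add0r addr0 => /eqP; rewrite addr_eq0 => /eqP //.
Qed.
Lemma brNl x y : br (- x) y = - br x y.
Proof. by rewrite -scaleN1r brZl scaleN1r. Qed.
Lemma brNr x y : br y (- x) = - br y x.
Proof. by rewrite -scaleN1r brZr scaleN1r. Qed.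
Lemma br_suml I (r : seq I) (P : pred I) (f : I -> L) z :
  br (\sum_(i <- r | P i) f i) z = \sum_(i <- r | P i) br (f i) z.
Proof. by elim/big_rec2: _ => [|i a b _ <-]; rewrite ?br0l ?brDl. Qed.
Lemma br_sumr I (r : seq I) (P : pred I) (f : I -> L) z :
  br z (\sum_(i <- r | P i) f i) = \sum_(i <- r | P i) br z (f i).
Proof. by elim/big_rec2: _ => [|i a b _ <-]; rewrite ?br0r ?brDr. Qed.
Lemma jacobi_l a b y : br (br a b) y = br a (br b y) + br b (br y a).
Proof.
case: Hbr => _ _ _ J; have := J a b y.
rewrite [br y (br a b)]brN => /eqP; rewrite subr_eq0 => /eqP //.
Qed.

Definition lclosed (P : L -> Prop) :=
  P 0 /\ (forall a u v, P u -> P v -> P (a *: u + v)).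

Lemma span_closed (P : L -> Prop) (X : seq L) : lclosed P ->
  (forall x, x \in X -> P x) -> forall v, v \in <<X>>%VS -> P v.
Proof.
move=> [P0 PL] PX v /(coord_span (X := in_tuple X)) ->.
apply: big_ind => //.
  by move=> u w Pu Pw; rewrite -[u]scale1r; apply: PL.
move=> i _; rewrite -[_ *: _]addr0; apply: PL => //; apply: PX.
exact: mem_nth (ltn_ord i).
Qed.

Lemma bspan_sub U W Z : is_bracket_span br U W Z ->
  (Z <= <<allpairs br (vbasis U) (vbasis W)>>)%VS.
Proof.
case=> _ H; apply: H => x y /coord_vbasis -> /coord_vbasis ->.
rewrite br_suml; apply: rpred_sum => i _; rewrite brZl br_sumr.
apply: rpredZ; apply: rpred_sum => j _; rewrite brZr; apply: rpredZ.
by apply: memv_span; apply: allpairs_f; apply: mem_nth; rewrite size_tuple.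
Qed.

Lemma bspan_ind U W Z (P : L -> Prop) : is_bracket_span br U W Z -> lclosed P ->
  (forall x y, x \in U -> y \in W -> P (br x y)) -> forall z, z \in Z -> P z.
Proof.
move=> HZ PC PB z /(subvP (bspan_sub HZ)); apply: span_closed => // w.
by case/allpairsP => [[x y] [/= /vbasis_mem Hx /vbasis_mem Hy ->]]; apply: PB.
Qed.

Lemma bspan_uniq U W Z1 Z2 : is_bracket_span br U W Z1 ->
  is_bracket_span br U W Z2 -> Z1 = Z2.
Proof.
move=> [H1 M1] [H2 M2]; apply/eqP; rewrite eqEsubv.
by rewrite (M1 _ H2) (M2 _ H1).
Qed.

Lemma sum_ind (P : L -> Prop) m n (Vs : nat -> {vspace L}) : lclosed P ->
  (forall i v, (m <= i < n)%N -> v \in Vs i -> P v) ->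
  forall v, v \in (\sum_(m <= i < n) Vs i)%VS -> P v.
Proof.
move=> [P0 PL] H; rewrite big_nat_cond.
apply: (big_ind (fun U : {vspace L} => forall v, v \in U -> P v)).
- by move=> v; rewrite memv0 => /eqP ->.
- move=> U1 U2 H1 H2 v /memv_addP [u Hu [w Hw ->]].
  by rewrite -[u]scale1r; apply: PL; [apply: H1|apply: H2].
- by move=> i /andP [Hi _] v; apply: H.
Qed.

Lemma dir_nat (Us : nat -> {vspace L}) s :
  directv (\sum_(1<=i<s.+1) Us i) ->
  forall us : nat -> L, (forall i, (1<=i<=s)%N -> us i \in Us i) ->
  \sum_(1<=i<s.+1) us i = 0 -> forall i, (1<=i<=s)%N -> us i = 0.
Proof.
move=> D us Hu Hs.
have D' : directv (\sum_(i < s) Us i.+1).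
  move: D; rewrite !directvE /=. rewrite big_add1 big_mkord /=.
  rewrite big_add1 big_mkord. done.
move/directv_sum_independent: D' => /(_ (fun i : 'I_s => us i.+1)) H.
move=> [|i] // /andP[_ Hi].
have := H (fun j _ => Hu j.+1 (ltn_ord j)).
rewrite big_add1 big_mkord in Hs. move=> /(_ Hs (Ordinal Hi)). by apply.
Qed.

End Basic.

Section Strat.
Variables (F : fieldType) (L : vectType F) (br : L -> L -> L).
Hypothesis Hbr : is_lie_bracket br.
Variables (s : nat) (V : nat -> {vspace L}).
Hypothesis HV : stratification br s V.

Definition Vx k := if (1 <= k <= s)%N then V k else 0%VS.
Definition G k := (\sum_(k <= i < s.+1) V i)%VS.

Lemma HVfull : (\sum_(1 <= i < s.+1) V i)%VS = fullv.
Proof. by case: HV. Qed.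
Lemma HVdir : directv (\sum_(1 <= i < s.+1) V i)%VS.
Proof. by case: HV. Qed.
Lemma HVsb j : (1 <= j <= s)%N -> is_bracket_span br (V 1) (V j) (Vx j.+1).
Proof.
case: HV => _ _ _ _ H Hj; move: (H j Hj); rewrite /Vx.
case/andP: Hj => _; rewrite leq_eqVlt => /orP [/eqP ->|->] //.
Qed.

Lemma lcl_mem (U : {vspace L}) : lclosed (fun v => v \in U).
Proof. by split; [exact: mem0v | move=> a u v Hu Hv; rewrite memvD ?memvZ]. Qed.

Lemma Vx_out k : ~~ (1 <= k <= s)%N -> Vx k = 0%VS.
Proof. by rewrite /Vx => /negPf ->. Qed.

Lemma base1 j x y : x \in V 1 -> y \in Vx j -> br x y \in Vx j.+1.
Proof.
move=> Hx; case Hj: (1 <= j <= s)%N.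
  by rewrite {1}/Vx Hj => Hy; case: (HVsb Hj) => H _; apply: H.
rewrite Vx_out ?Hj // memv0 => /eqP ->; by rewrite (br0r Hbr) mem0v.
Qed.

Lemma grade i j x y : x \in Vx i -> y \in Vx j -> br x y \in Vx (i + j).
Proof.
elim: i j x y => [|i IH] j x y.
  by rewrite Vx_out // memv0 => /eqP ->; rewrite (br0l Hbr) mem0v.
case Hi: (1 <= i.+1 <= s)%N; last first.
  by rewrite Vx_out ?Hi // memv0 => /eqP ->; rewrite (br0l Hbr) mem0v.
rewrite {1}/Vx Hi; case: i IH Hi => [|i] IH Hi.
  by move=> Hx; rewrite add1n; apply: base1.
have Hi' : (1 <= i.+1 <= s)%N by move: Hi => /andP [_ /ltnW] ->.
have HS := HVsb Hi'; rewrite /Vx Hi in HS.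
move=> Hx; move: j y; pattern x; apply: (bspan_ind Hbr HS) Hx.
- split; first by move=> j y _; rewrite (br0l Hbr) mem0v.
  by move=> a u v Hu Hv j y Hy; rewrite (brDl Hbr) (brZl Hbr) memvD ?memvZ ?Hu ?Hv.
- move=> a b Ha Hb j y Hy; rewrite (jacobi_l Hbr) memvD //.
    rewrite [(i.+2 + j)%N]addSn; apply: base1 => //; apply: IH Hy.
    by rewrite /Vx Hi' .
  rewrite [br y a](brN Hbr) (brNr Hbr) memvN addSnnS; apply: IH.
    by rewrite /Vx Hi'.
  by apply: base1.
Qed.

Lemma G_out k : (s < k)%N -> G k = 0%VS.
Proof. by move=> Hk; rewrite /G big_geq. Qed.
Lemma G_rec k : (k <= s)%N -> G k = (V k + G k.+1)%VS.
Proof. by move=> Hk; rewrite /G big_ltn. Qed.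
Lemma G1 : G 1 = fullv.
Proof. exact: HVfull. Qed.

Lemma V_subG i k : (k <= i <= s)%N -> (V i <= G k)%VS.
Proof.
case/andP=> Hki His; rewrite /G (@big_cat_nat _ _ _ i k s.+1); last first.
- by apply: leqW.
- exact: Hki.
rewrite (@big_ltn _ _ _ i s.+1); last by [].
exact: subv_trans (addvSl (V i) _) (addvSr _ _).
Qed.

Lemma Vx_subG i k : (k <= i)%N -> (Vx i <= G k)%VS.
Proof.
move=> Hki; rewrite /Vx; case: ifP => [/andP [_ His]|_]; last exact: sub0v.
by apply: V_subG; rewrite Hki.
Qed.

Lemma G_mono p q : (q <= p)%N -> (G p <= G q)%VS.
Proof.
move=> Hqp; apply/subvP; apply: sum_ind; first exact: lcl_mem.
move=> i v /andP [Hpi His] Hv; apply: (subvP (V_subG _)) Hv.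
by rewrite (leq_trans Hqp Hpi).
Qed.

Lemma G_grade p q x y : (1 <= p)%N -> (1 <= q)%N ->
  x \in G p -> y \in G q -> br x y \in G (p + q).
Proof.
move=> Hp Hq Hx; move: x Hx y; apply: sum_ind.
  split; first by move=> y _; rewrite (br0l Hbr) mem0v.
  by move=> a u v Hu Hv y Hy; rewrite (brDl Hbr) (brZl Hbr) memvD ?memvZ ?Hu ?Hv.
move=> i x /andP [Hpi His] Hx; apply: sum_ind.
  split; first by rewrite (br0r Hbr) mem0v.
  by move=> a u v Hu Hv; rewrite (brDr Hbr) (brZr Hbr) memvD ?memvZ ?Hu ?Hv.
move=> j y /andP [Hqj Hjs] Hy.
apply: (subvP (Vx_subG (leq_add Hpi Hqj))); apply: grade.
  by rewrite /Vx (leq_trans Hp Hpi) -ltnS His.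
by rewrite /Vx (leq_trans Hq Hqj) -ltnS Hjs.
Qed.

Lemma lcs k : (1 <= k)%N -> is_bracket_span br fullv (G k) (G k.+1).
Proof.
move=> Hk; split.
  by move=> x y _ Hy; rewrite -add1n; apply: G_grade => //; rewrite G1 memvf.
move=> Z H; apply/subvP; apply: sum_ind; first exact: lcl_mem.
move=> [|i] v /andP [Hki His] Hv //.
have Hi : (1 <= i <= s)%N by lia.
case: (HVsb Hi) => _ M.
have E : Vx i.+1 = V i.+1 by rewrite /Vx ifT //; lia.
rewrite E in M; apply: (subvP (M Z _)) Hv => x y _ Hy; apply: H; first exact: memvf.
by apply: (subvP (V_subG _)) Hy; lia.
Qed.

Definition spi i := sumv_pi_for (esym HVfull) i.

Lemma pi_mem i v : spi i v \in V i.
Proof. exact: memv_sum_pi. Qed.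

Lemma pi_sum v : \sum_(1 <= i < s.+1) spi i v = v.
Proof.
apply: sumv_pi_uniq_sum; last exact: memvf.
by rewrite filter_predT iota_uniq.
Qed.

Lemma pi_uniq (vs : nat -> L) v : (forall i, (1 <= i <= s)%N -> vs i \in V i) ->
  v = \sum_(1 <= i < s.+1) vs i -> forall j, (1 <= j <= s)%N -> spi j v = vs j.
Proof.
move=> Hvs Hv j Hj; apply/eqP; rewrite -subr_eq0; apply/eqP.
apply: (dir_nat HVdir (us := fun i => spi i v - vs i)) => //.
  by move=> i Hi; rewrite memvB ?pi_mem ?Hvs.
by rewrite sumrB pi_sum -Hv subrr.
Qed.

Lemma pi_V i j v : (1 <= i <= s)%N -> (1 <= j <= s)%N -> v \in V i ->
  spi j v = if j == i then v else 0.
Proof.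
move=> Hi Hj Hv; apply: (pi_uniq (vs := fun k => if k == i then v else 0)) => //.
  by move=> k _; case: eqP => [->|_] //; exact: mem0v.
rewrite (bigD1_seq i) /=; first last.
- exact: iota_uniq.
- rewrite mem_index_iota; lia.
by rewrite eqxx big1 ?addr0 // => k /negPf ->.
Qed.

Lemma pi_G k j v : (1 <= j < k)%N -> v \in G k -> spi j v = 0.
Proof.
move=> Hj; move: v; apply: sum_ind.
  by split; [rewrite /= linear0 | move=> a u w /= Hu Hw; rewrite linearD linearZ /= Hu Hw scaler0 addr0].
move=> i v /andP [Hki His] Hv; case/andP: Hj => Hj1 Hjk.
rewrite (pi_V (i := i)) //.
- by case: eqP => // Eji; exfalso; lia.
- lia.
- lia.
Qed.

Lemma pi_diff k v : (1 <= k <= s)%N -> v \in G k -> v - spi k v \in G k.+1.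
Proof.
move=> Hk; move: v; apply: sum_ind.
  split; first by rewrite linear0 subrr mem0v.
  move=> a u w /= Hu Hw; rewrite linearD linearZ /=.
  have -> : a *: u + w - (a *: spi k u + spi k w) = a *: (u - spi k u) + (w - spi k w).
    by rewrite scalerBr opprD addrACA.
  by rewrite memvD ?memvZ.
move=> i v /andP [Hki His] Hv.
have Hi : (1 <= i <= s)%N by lia.
rewrite (pi_V Hi Hk Hv); case: eqP => [_|Hne]; first by rewrite subrr mem0v.
rewrite subr0; apply: (subvP (V_subG _)) Hv.
by move/eqP: Hne => Hne; lia.
Qed.

End Strat.

Section Two.
Variables (F : fieldType) (L : vectType F) (br : L -> L -> L).
Hypothesis Hbr : is_lie_bracket br.
Variables (s : nat) (V W : nat -> {vspace L}).
Hypothesis HV : stratification br s V.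
Hypothesis HW : stratification br s W.
Hypothesis HG : forall k, (1 <= k)%N -> G s V k = G s W k.

Lemma sum_delta i (x : L) : (1 <= i <= s)%N ->
  \sum_(1 <= j < s.+1) (if j == i then x else 0) = x.
Proof.
move=> Hi; rewrite (bigD1_seq i) /=; first last.
- exact: iota_uniq.
- rewrite mem_index_iota; lia.
by rewrite eqxx big1 ?addr0 // => k /negPf ->.
Qed.

Definition Amap : 'End(L) := (\sum_(1 <= i < s.+1) (spi HW i \o spi HV i)%VF).

Lemma A_apply v : Amap v = \sum_(1 <= i < s.+1) spi HW i (spi HV i v).
Proof. by rewrite sum_lfunE; apply: eq_bigr => i _; rewrite comp_lfunE. Qed.

Lemma A_V i v : (1 <= i <= s)%N -> v \in V i -> Amap v = spi HW i v.
Proof.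
move=> Hi Hv; rewrite A_apply -(sum_delta (spi HW i v) Hi).
apply: eq_big_seq => j; rewrite mem_index_iota => Hj.
have Hj' : (1 <= j <= s)%N by lia.
rewrite (pi_V HV Hi Hj' Hv).
by case: eqP => [->|_] //; rewrite linear0.
Qed.

Lemma A_memW i v : (1 <= i <= s)%N -> v \in V i -> Amap v \in W i.
Proof. by move=> Hi Hv; rewrite (A_V Hi Hv) pi_mem. Qed.

Lemma A_diff i v : (1 <= i <= s)%N -> v \in V i -> v - Amap v \in G s V i.+1.
Proof.
move=> Hi Hv; rewrite (A_V Hi Hv) HG //; apply: pi_diff => //.
rewrite -HG; last by lia.
by apply: (subvP (V_subG _ _)) Hv; lia.
Qed.

Lemma A_br i j x y : (1 <= i <= s)%N -> (1 <= j <= s)%N -> x \in V i -> y \in V j ->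
  Amap (br x y) = br (Amap x) (Amap y).
Proof.
move=> Hi Hj Hx Hy.
set a := x - Amap x; set b := y - Amap y.
have Ex : x = Amap x + a by rewrite /a addrC subrK.
have Ey : y = Amap y + b by rewrite /b addrC subrK.
have Ha : a \in G s V i.+1 by apply: A_diff.
have Hb : b \in G s V j.+1 by apply: A_diff.
have HAx : Amap x \in G s V i.
  rewrite HG; last by lia.
  have Hii : (i <= i <= s)%N by lia.
  by apply: (subvP (V_subG W Hii) _ (A_memW Hi Hx)).
have HAy : Amap y \in G s V j.
  rewrite HG; last by lia.
  have Hjj : (j <= j <= s)%N by lia.
  by apply: (subvP (V_subG W Hjj) _ (A_memW Hj Hy)).
set c := br (Amap x) b + br a (Amap y) + br a b.
have Exy : br x y = br (Amap x) (Amap y) + c.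
  rewrite /c {1}Ex {1}Ey (brDl Hbr) !(brDr Hbr); rewrite !addrA.
  by rewrite -[_ + br a _ + _]addrA [br a _ + _]addrC !addrA.
have Hc : c \in G s V (i + j).+1.
  rewrite memvD // ?memvD //.
  - by rewrite -addnS; apply: (G_grade Hbr HV) => //; lia.
  - by rewrite -addSn; apply: (G_grade Hbr HV) => //; lia.
  - have Hmono : (G s V (i.+1 + j.+1) <= G s V (i+j).+1)%VS.
      by apply: G_mono; lia.
    by apply: (subvP Hmono _); apply: (G_grade Hbr HV) => //; lia.
have HAxy : br (Amap x) (Amap y) \in Vx s W (i + j).
  apply: (grade Hbr HW).
    by rewrite /Vx ifT ?A_memW //; lia.
  by rewrite /Vx ifT ?A_memW //; lia.
have Hxy : br x y \in Vx s V (i + j).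
  by apply: (grade Hbr HV); rewrite /Vx ifT //; lia.
case Hm : (i + j <= s)%N; last first.
  rewrite Vx_out in Hxy; last by rewrite Hm andbF.
  rewrite Vx_out in HAxy; last by rewrite Hm andbF.
  by move: Hxy HAxy; rewrite !memv0 => /eqP -> /eqP ->; rewrite linear0.
have Hm' : (1 <= i + j <= s)%N by lia.
rewrite /Vx Hm' in Hxy HAxy.
rewrite (A_V Hm' Hxy) Exy linearD /=.
rewrite (pi_V HW Hm' Hm' HAxy) eqxx.
have Hc' : c \in G s W (i+j).+1 by rewrite -HG.
have Hr : (1 <= i + j < (i+j).+1)%N by lia.
by rewrite (pi_G HW Hr Hc') addr0.
Qed.

Lemma A_hom x y : Amap (br x y) = br (Amap x) (Amap y).
Proof.
rewrite -[x](pi_sum HV) -[y](pi_sum HV) !linear_sum (br_suml Hbr) (br_suml Hbr).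
rewrite linear_sum; apply: eq_big_seq => i; rewrite mem_index_iota => Hi.
rewrite (br_sumr Hbr) (br_sumr Hbr) linear_sum; apply: eq_big_seq => j.
rewrite mem_index_iota => Hj; apply: (@A_br i j); rewrite ?pi_mem //; lia.
Qed.

End Two.

Lemma BAi (F : fieldType) (L : vectType F) (br : L -> L -> L)
  (Hbr : is_lie_bracket br) s (V W : nat -> {vspace L})
  (HV : stratification br s V) (HW : stratification br s W)
  (HG : forall k, (1 <= k)%N -> G s V k = G s W k) i vi :
  (1 <= i <= s)%N -> vi \in V i ->
  Amap HW HV (Amap HV HW vi) = vi.
Proof.
move=> Hi Hvi.
have HAvi : Amap HV HW vi \in W i by apply: A_memW.
rewrite (A_V HW HV Hi HAvi).
have -> : Amap HV HW vi = vi - (vi - Amap HV HW vi) by rewrite opprB addrC subrK.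
rewrite linearB /= (pi_V HV Hi Hi Hvi) eqxx.
have Hd := A_diff HV HW HG Hi Hvi.
have Hr : (1 <= i < i.+1)%N by lia.
by rewrite (pi_G HV Hr Hd) subr0.
Qed.

Lemma BA (F : fieldType) (L : vectType F) (br : L -> L -> L)
  (Hbr : is_lie_bracket br) s (V W : nat -> {vspace L})
  (HV : stratification br s V) (HW : stratification br s W)
  (HG : forall k, (1 <= k)%N -> G s V k = G s W k) v :
  Amap HW HV (Amap HV HW v) = v.
Proof.
rewrite -[v](pi_sum HV) !linear_sum; apply: eq_big_seq => i.
rewrite mem_index_iota => Hi'.
have Hi : (1 <= i <= s)%N by lia.
exact: (BAi Hbr HV HW HG Hi (pi_mem HV i v)).
Qed.

Lemma lcs_eq (F : fieldType) (L : vectType F) (br : L -> L -> L)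
  (Hbr : is_lie_bracket br) s t (V W : nat -> {vspace L})
  (HV : stratification br s V) (HW : stratification br t W) :
  forall k, (1 <= k)%N -> G s V k = G t W k.
Proof.
elim=> [//|k IH] _; case: k IH => [|k] IH.
  by rewrite (G1 HV) (G1 HW).
have Hk : (1 <= k.+1)%N by [].
have := lcs Hbr HV Hk; rewrite IH // => H1.
exact: bspan_uniq H1 (lcs Hbr HW Hk).
Qed.

Lemma s_le (F : fieldType) (L : vectType F) (br : L -> L -> L)
  (Hbr : is_lie_bracket br) s t (V W : nat -> {vspace L})
  (HV : stratification br s V) (HW : stratification br t W) : (t <= s)%N.
Proof.
rewrite leqNgt; apply/negP => Hst.
have Ht : (1 <= t)%N by case: HW.
have Wt : W t != 0%VS by case: HW.
have Htt : (t <= t <= t)%N by rewrite leqnn.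
have := V_subG W Htt; rewrite -(lcs_eq Hbr HV HW Ht) (G_out _ Hst) subv0.
by move/eqP=> E; move: Wt; rewrite E eqxx.
Qed.

Theorem mainTheorem2 (F : realFieldType) (L : vectType F) (br : L -> L -> L)
    (s t : nat) (V W : nat -> {vspace L}) :
  is_lie_bracket br ->
  stratification br s V ->
  stratification br t W ->
  s = t /\
  exists A : 'End(L),
    lie_automorphism br A /\
    (forall i, (1 <= i <= s)%N -> (A @: V i)%VS = W i).
Proof.
move=> Hbr HV HW.
have Est : s = t by apply/eqP; rewrite eqn_leq (s_le Hbr HV HW) (s_le Hbr HW HV).
split=> //; subst t.
have HG := lcs_eq Hbr HV HW.
have HG' := lcs_eq Hbr HW HV.
exists (Amap HV HW); split; first split.
- apply/eqP/lker0P => u v E.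
  by rewrite -(BA Hbr HV HW HG u) E (BA Hbr HV HW HG v).
- exact: (A_hom Hbr HV HW HG).
move=> i Hi; apply/eqP; rewrite eqEsubv; apply/andP; split.
  by apply/subvP => w /memv_imgP [v Hv ->]; apply: A_memW.
apply/subvP => w Hw; rewrite -(BA Hbr HW HV HG' w); apply: memv_img.
exact: A_memW.
Qed.
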